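(* Let $\mathcal{X}=\mathcal{X}^{(1)}\times\cdots\times\mathcal{X}^{(d)}$ with each $\mathcal{X}^{(j)}$ finite, $G$ an undirected graph on $\{1,\dots,d\}$ and $(C_i)_{i=1}^n$ cliques of $G$ (possibly overlapping) with $\bigcup_iC_i=\{1,\dots,d\}$. Let $\pi\in\mathcal{P}(\mathcal{X})$ be positive, $P\in\mathcal{L}(\mathcal{X})$, and let $M\in\mathcal{L}(\mathcal{X})$ be $(C_i)_{i=1}^n$-factorizable with respect to $G$ and $(L_i)_{i=1}^n$, $L_i\in\mathcal{L}(\mathcal{X}^{(C_i)})$. If $Z(x,(L_i)_{i=1}^n)\ge Z(x,(P^{(C_i)}_\pi)_{i=1}^n)$ for all $x\in\mathcal{X}$, then $D^\pi_{KL}(P\|M)\ge D^\pi_{KL}(P\|\mathbf{P}_\pi)+\sum_{i=1}^nD^{\pi^{(C_i)}}_{KL}(P^{(C_i)}_\pi\|L_i)$. Consequently $\mathbf{P}_\pi$ is the unique minimizer of $D^\pi_{KL}(P\|M)$ over all $(C_i)$-factorizable $M$ (w.r.t. $G$ and some $(L_i)$) with $Z(x,(L_i)_{i=1}^n)\ge Z(x,(P^{(C_i)}_\pi)_{i=1}^n)$ for all $x$, with minimum value $D^\pi_{KL}(P\|\mathbf{P}_\pi)$.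
   Context: $D_{KL}^{\pi}(M\|L):=\sum_{x,y}\pi(x)M(x,y)\ln\frac{M(x,y)}{L(x,y)}$. A clique of $G$ is a vertex set any two of whose elements are joined by an edge. For $C\subseteq\{1,\dots,d\}$: $\mathcal{X}^{(C)}=\prod_{j\in C}\mathcal{X}^{(j)}$, $x^{(C)}=(x^j)_{j\in C}$, $\pi^{(C)}(x^{(C)})=\sum_{x^{(-C)}}\pi(x)$, $P^{(C)}_\pi(x^{(C)},y^{(C)}):=\frac{\sum_{x^{(-C)},y^{(-C)}}\pi(x)P(x,y)}{\pi^{(C)}(x^{(C)})}$. $M$ is $(C_i)_{i=1}^n$-factorizable w.r.t. $G$ and $(L_i)$ if $M(x,y)=\frac{1}{Z(x,(L_i)_{i=1}^n)}\prod_{i=1}^nL_i(x^{(C_i)},y^{(C_i)})$ with $Z(x,(L_i)_{i=1}^n):=\sum_{y\in\mathcal{X}}\prod_{i=1}^nL_i(x^{(C_i)},y^{(C_i)})$. $\mathbf{P}_\pi(x,y):=\frac{1}{Z(x,(P^{(C_i)}_\pi)_{i=1}^n)}\prod_{i=1}^nP^{(C_i)}_\pi(x^{(C_i)},y^{(C_i)})$. *)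

(* Defs.v *)
From HB Require Import structures.
From mathcomp Require Import all_boot all_order all_algebra.
From mathcomp Require Import all_classical all_reals.
From mathcomp Require Import exp.

Set Implicit Arguments.
Unset Strict Implicit.
Unset Printing Implicit Defensive.

Import Order.TTheory GRing.Theory Num.Theory.
Local Open Scope ring_scope.

Section Defs.
Variable R : realType.

Definition is_prob (S : finType) (mu : S -> R) : Prop :=
  (forall s, 0 <= mu s) /\ \sum_(s : S) mu s = 1.

Definition is_kernel (S : finType) (K : S -> S -> R) : Prop :=
  (forall s t, 0 <= K s t) /\ (forall s, \sum_(t : S) K s t = 1).

Definition kl_term (p m l : R) : \bar R :=
  if p * m == 0 then 0%E
  else if l == 0 then +oo%E
  else (p * m * ln (m / l))%:E.

Definition KL (S : finType) (pi : S -> R) (M L : S -> S -> R) : \bar R :=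
  (\sum_(x : S) \sum_(y : S) kl_term (pi x) (M x y) (L x y))%E.

Variable d : nat.
Variable T : 'I_d -> finType.

Definition Xs := {dffun forall j : 'I_d, T j}.

Definition XC (C : {set 'I_d}) :=
  {dffun forall j : {j : 'I_d | j \in C}, T (val j)}.

Definition restr (C : {set 'I_d}) (x : Xs) : XC C :=
  [ffun j : {j : 'I_d | j \in C} => x (val j)].

Definition marg (C : {set 'I_d}) (pi : Xs -> R) (u : XC C) : R :=
  \sum_(x : Xs | restr C x == u) pi x.

Definition kmarg (C : {set 'I_d}) (pi : Xs -> R) (P : Xs -> Xs -> R)
    (u v : XC C) : R :=
  (\sum_(x : Xs | restr C x == u) \sum_(y : Xs | restr C y == v) pi x * P x y)
  / marg pi u.

Definition clique (G : rel 'I_d) (C : {set 'I_d}) : Prop :=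
  forall i j, i \in C -> j \in C -> i != j -> G i j.

Variable n : nat.

Definition Zf (C : 'I_n -> {set 'I_d})
    (L : forall i : 'I_n, XC (C i) -> XC (C i) -> R) (x : Xs) : R :=
  \sum_(y : Xs) \prod_(i < n) L i (restr (C i) x) (restr (C i) y).

Definition factorizable (G : rel 'I_d) (C : 'I_n -> {set 'I_d})
    (L : forall i : 'I_n, XC (C i) -> XC (C i) -> R) (M : Xs -> Xs -> R) : Prop :=
  (forall i, clique G (C i)) /\
  forall x y, M x y = (\prod_(i < n) L i (restr (C i) x) (restr (C i) y)) / Zf L x.

Definition Pfam (C : 'I_n -> {set 'I_d}) (pi : Xs -> R) (P : Xs -> Xs -> R) :
    forall i : 'I_n, XC (C i) -> XC (C i) -> R :=
  fun i => kmarg pi P (C:=C i).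

Definition Pbold (C : 'I_n -> {set 'I_d}) (pi : Xs -> R) (P : Xs -> Xs -> R)
    (x y : Xs) : R :=
  (\prod_(i < n) @Pfam C pi P i (restr (C i) x) (restr (C i) y)) / Zf (@Pfam C pi P) x.

Definition admissible (G : rel 'I_d) (C : 'I_n -> {set 'I_d})
    (pi : Xs -> R) (P : Xs -> Xs -> R) (M : Xs -> Xs -> R) : Prop :=
  exists L : forall i : 'I_n, XC (C i) -> XC (C i) -> R,
    (forall i, is_kernel (L i)) /\ is_kernel M /\ factorizable G L M /\
    (forall x, Zf (@Pfam C pi P) x <= Zf L x).

End Defs.

Arguments is_prob {R S} mu.
Arguments is_kernel {R S} K.
Arguments KL {R S} pi M L.
Arguments restr {d T} C x.
Arguments marg {R d T} C pi u.
Arguments kmarg {R d T} C pi P u v.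
Arguments clique {d} G C.
Arguments Zf {R d T n} C L x.
Arguments factorizable {R d T n} G C L M.
Arguments Pfam {R d T n} C pi P i _ _.
Arguments Pbold {R d T n} C pi P x y.
Arguments admissible {R d T n} G C pi P M.

(* Main.v *)
Require Import Defs.
From HB Require Import structures.
From mathcomp Require Import all_boot all_order all_algebra.
From mathcomp Require Import all_classical all_reals.
From mathcomp Require Import exp.
From mathcomp Require Import lra ring.
Import Order.TTheory GRing.Theory Num.Theory.
Local Open Scope ring_scope.
Set Implicit Arguments.
Unset Strict Implicit.
Unset Printing Implicit Defensive.

Section Gen.
Variable R : realType.

Definition klr (p m l : R) : R := if p * m == 0 then 0 else p * m * (ln m - ln l).

Lemma kl_term_fin (p m l : R) : 0 < p -> 0 <= m -> (p * m != 0 -> 0 < l) ->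
  kl_term p m l = (klr p m l)%:E.
Proof.
rewrite /kl_term /klr => p0 m0 h; case: eqP => // /eqP pm.
have l0 := h pm; rewrite gt_eqF //.
have mp : 0 < m by rewrite lt_def m0 andbT; apply: contra pm => /eqP ->; rewrite mulr0.
by rewrite ln_div // posrE.
Qed.

Lemma kl_term_ninf (p m l : R) : kl_term p m l != -oo%E.
Proof. by rewrite /kl_term; case: ifP => //; case: ifP. Qed.

Lemma kl_term_inf (p m l : R) : p * m != 0 -> l = 0 -> kl_term p m l = +oo%E.
Proof. by rewrite /kl_term => /negbTE -> ->; rewrite eqxx. Qed.

Lemma klr_eq (p m l : R) : (p * m != 0 -> 0 < m /\ 0 < l) ->
  klr p m l = p * m * (ln m - ln l).
Proof.
rewrite /klr; case: eqP => [->|/eqP h]; first by rewrite mul0r.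
done.
Qed.

Lemma gibbs_ge (m l : R) : 0 < m -> 0 < l -> m - l <= m * (ln m - ln l).
Proof.
move=> m0 l0.
have := expR_ge1Dx (ln l - ln m).
rewrite -ln_div ?posrE // lnK ?posrE ?divr_gt0 // => h.
have : m * (1 + ln (l / m)) <= m * (l / m) by rewrite ler_pM2l.
rewrite mulrDr mulr1 mulrCA divff ?gt_eqF // mulr1 ln_div ?posrE //.
move=> h2; rewrite mulrBr; lra.
Qed.

Lemma gibbs_eq (m l : R) : 0 < m -> 0 < l -> m * (ln m - ln l) = m - l -> l = m.
Proof.
move=> m0 l0 e.
have [//|ne] := eqVneq l m.
have t0 : ln l - ln m != 0.
  rewrite subr_eq0; apply: contra ne => /eqP h; apply/eqP.
  by apply: ln_inj; rewrite ?posrE.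
have := expR_gt1Dx t0.
rewrite -ln_div ?posrE // lnK ?posrE ?divr_gt0 // => h.
have : m * (1 + ln (l / m)) < m * (l / m) by rewrite ltr_pM2l.
rewrite mulrDr mulr1 mulrCA divff ?gt_eqF // mulr1 ln_div ?posrE //.
move=> h2; exfalso; move: e; rewrite mulrBr; lra.
Qed.


Lemma sum_ge_term (I : finType) (Pr : pred I) (F : I -> R) j :
  (forall i, Pr i -> 0 <= F i) -> Pr j -> F j <= \sum_(i | Pr i) F i.
Proof. by move=> h Pj; rewrite (bigD1 j) //= lerDl sumr_ge0 // => i /andP[/h]. Qed.

Lemma sum_pos_ex (I : finType) (Pr : pred I) (F : I -> R) :
  0 < \sum_(i | Pr i) F i -> exists i, Pr i /\ 0 < F i.
Proof.
move=> h; apply: contrapT => hn; move: h; rewrite ltNge => /negP; apply.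
apply: (@le_trans _ _ (\sum_(i | Pr i) (0:R))); last by rewrite big1_eq.
apply: ler_sum => i Pi.
by rewrite leNgt; apply/negP => Fi; apply: hn; exists i.
Qed.

Lemma ln_prod (I : finType) (F : I -> R) : (forall i, 0 < F i) ->
  0 < \prod_i F i /\ ln (\prod_i F i) = \sum_i ln (F i).
Proof.
move=> h; apply: (big_rec2 (fun a b => 0 < a /\ ln a = b)) => [|i b a _ [a0 <-]].
  by rewrite ln1.
by split; [rewrite mulr_gt0 | rewrite lnM ?posrE].
Qed.

Lemma exch3 (I J K : finType) (F : I -> J -> K -> R) :
  \sum_i \sum_j \sum_k F i j k = \sum_j \sum_k \sum_i F i j k.
Proof. by rewrite exchange_big; apply: eq_bigr => j _; rewrite exchange_big. Qed.

Section KLgen.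
Variables (S : finType) (mu : S -> R) (K Lk : S -> S -> R).
Hypothesis mu0 : forall s, 0 < mu s.
Hypothesis K0 : forall s t, 0 <= K s t.

Lemma KL_real : (forall s t, mu s * K s t != 0 -> 0 < Lk s t) ->
  KL mu K Lk = (\sum_s \sum_t mu s * K s t * (ln (K s t) - ln (Lk s t)))%:E.
Proof.
move=> hL; rewrite /KL -sumEFin; apply: eq_bigr => s _; rewrite -sumEFin.
apply: eq_bigr => t _; rewrite kl_term_fin //; last exact: hL.
rewrite klr_eq // => h; split; last exact: hL.
rewrite lt_def K0 andbT; apply: contra h => /eqP ->; by rewrite mulr0.
Qed.

Lemma KL_inf : (exists s t, mu s * K s t != 0 /\ Lk s t = 0) -> KL mu K Lk = +oo%E.
Proof.
case=> s [t [h1 h2]]; rewrite /KL; apply/esum_eqyP.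
  move=> s' _; apply/negP => /eqP/esum_eqNyP [t' [_ _ /eqP]].
  by rewrite (negbTE (kl_term_ninf _ _ _)).
exists s; split => //.
apply/esum_eqyP; first by move=> t' _; exact: kl_term_ninf.
by exists t; split => //; exact: kl_term_inf.
Qed.


Definition gap (k l : R) := k * (ln k - ln l) - (k - l).

Lemma gap_ge0 k l : 0 <= k -> 0 <= l -> (k != 0 -> 0 < l) -> 0 <= gap k l.
Proof.
rewrite /gap => k0 l0 h; have [->|kn] := eqVneq k 0; first by rewrite mul0r add0r sub0r opprK.
rewrite subr_ge0 gibbs_ge //; last exact: h.
by rewrite lt_def kn.
Qed.

Lemma gap_eq0 k l : 0 <= k -> 0 <= l -> (k != 0 -> 0 < l) -> gap k l = 0 -> l = k.
Proof.
rewrite /gap => k0 l0 h; have [->|kn] := eqVneq k 0.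
  by rewrite mul0r add0r sub0r opprK.
move/eqP; rewrite subr_eq0 => /eqP e; apply: gibbs_eq e; last exact: h.
by rewrite lt_def kn.
Qed.

Hypothesis Kk : is_kernel K.
Hypothesis Lkk : is_kernel Lk.

Lemma row_gap s : \sum_t K s t * (ln (K s t) - ln (Lk s t)) = \sum_t gap (K s t) (Lk s t).
Proof.
rewrite /gap sumrB sumrB Kk.2 Lkk.2 subrr subr0 //.
Qed.

Lemma fin_hyp : ~ (exists s t, mu s * K s t != 0 /\ Lk s t = 0) ->
  forall s t, mu s * K s t != 0 -> 0 < Lk s t.
Proof.
move=> hn s t h; rewrite lt_def Lkk.1 andbT; apply/negP => /eqP e.
by apply: hn; exists s, t.
Qed.

Lemma KL_sum_row (hL : forall s t, mu s * K s t != 0 -> 0 < Lk s t) :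
  KL mu K Lk = (\sum_s mu s * \sum_t gap (K s t) (Lk s t))%:E.
Proof.
rewrite KL_real //; congr (_%:E); apply: eq_bigr => s _.
rewrite -row_gap mulr_sumr; apply: eq_bigr => t _; by rewrite mulrA.
Qed.

Lemma gap_row_ge0 (hL : forall s t, mu s * K s t != 0 -> 0 < Lk s t) s t :
  0 <= gap (K s t) (Lk s t).
Proof.
apply: gap_ge0 => //; first exact: Lkk.1.
by move=> h; apply: hL; rewrite mulf_neq0 // gt_eqF.
Qed.

Lemma KL_ge0 : (0 <= KL mu K Lk)%E.
Proof.
have [hi|hn] := pselect (exists s t, mu s * K s t != 0 /\ Lk s t = 0).
  by rewrite KL_inf // leey.
have hL := fin_hyp hn.
have h : 0 <= \sum_s mu s * \sum_t gap (K s t) (Lk s t).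
  apply: sumr_ge0 => s _.
  apply: mulr_ge0; [exact: ltW | apply: sumr_ge0 => t _; exact: gap_row_ge0].
by rewrite KL_sum_row // lee_fin.
Qed.

Lemma KL_zero : KL mu K Lk = 0%E -> forall s t, Lk s t = K s t.
Proof.
have [hi|hn] := pselect (exists s t, mu s * K s t != 0 /\ Lk s t = 0).
  by rewrite KL_inf // leey.
have hL := fin_hyp hn.
rewrite KL_sum_row // => -[] /eqP; rewrite psumr_eq0; last first.
  move=> s _; apply: mulr_ge0; [exact: ltW | apply: sumr_ge0 => t _; exact: gap_row_ge0].
move=> /allP h s t; have /eqP := h s (mem_index_enum _).
move/eqP. rewrite mulf_eq0 gt_eqF //= psumr_eq0; last by move=> t' _; exact: gap_row_ge0.
move=> /allP/(_ t (mem_index_enum _))/eqP e.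
apply: gap_eq0 e => //; first exact: Lkk.1.
by move=> h'; apply: hL; rewrite mulf_neq0 // gt_eqF.
Qed.

End KLgen.

End Gen.

Section Main.
Variables (R : realType) (d : nat) (T : 'I_d -> finType) (n : nat).
Variable C : 'I_n -> {set 'I_d}.
Variables (pi : Xs T -> R) (P : Xs T -> Xs T -> R).
Hypothesis pi_prob : is_prob pi.
Hypothesis pi_pos : forall x, 0 < pi x.
Hypothesis P_ker : is_kernel P.

Local Notation X := (Xs T).

Definition Sm (D : {set 'I_d}) (u v : XC T D) : R :=
  \sum_(x | restr D x == u) \sum_(y | restr D y == v) pi x * P x y.

Lemma w_ge0 x y : 0 <= pi x * P x y.
Proof. by apply: mulr_ge0; [exact: ltW | exact: P_ker.1]. Qed.

Lemma Sm_ge0 D (u v : XC T D) : 0 <= Sm u v.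
Proof. by apply: sumr_ge0 => x _; apply: sumr_ge0 => y _; exact: w_ge0. Qed.

Lemma part_sum D (F : X -> R) :
  \sum_(v : XC T D) \sum_(y | restr D y == v) F y = \sum_y F y.
Proof. by rewrite (partition_big (restr D) predT). Qed.

Lemma Sm_row D (u : XC T D) : \sum_v Sm u v = marg D pi u.
Proof.
rewrite /Sm exchange_big /marg; apply: eq_bigr => x _.
by rewrite part_sum -mulr_sumr P_ker.2 mulr1.
Qed.

Lemma marg_ge0 D (u : XC T D) : 0 <= marg D pi u.
Proof. by apply: sumr_ge0 => x _; exact: ltW. Qed.

Lemma Sm_le D (u v : XC T D) : Sm u v <= marg D pi u.
Proof.
rewrite -Sm_row; apply: (sum_ge_term (Pr := predT)) => // v' _; exact: Sm_ge0.
Qed.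

Lemma X_inh : exists x0 : X, True.
Proof.
case: (pickP (@predT X)) => [x0 _|h]; first by exists x0.
have := pi_prob.2; rewrite big_pred0 // => /eqP; by rewrite eq_sym oner_eq0.
Qed.

Lemma extend D (u : XC T D) : exists x : X, restr D x = u.
Proof.
have [x0 _] := X_inh.
exists [ffun j : 'I_d => match (j \in D) as b return (j \in D = b -> T j) with
   true => fun h => u (exist _ j h) | false => fun _ => x0 j end (erefl (j \in D))].
apply/ffunP => -[j hj]; rewrite !ffunE /=.
move: (erefl (j \in D)).
rewrite {2 3}hj => e.
by rewrite (bool_irrelevance e hj).
Qed.

Lemma marg_gt0 D (u : XC T D) : 0 < marg D pi u.
Proof.
have [x hx] := extend u.
apply: lt_le_trans (pi_pos x) _; apply: sum_ge_term; last by rewrite hx.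
by move=> ? _; exact: ltW.
Qed.

Lemma Pfam_eq i (u v : XC T (C i)) : Pfam C pi P i u v = Sm u v / marg (C i) pi u.
Proof. by []. Qed.

Lemma margPfam i (u v : XC T (C i)) : marg (C i) pi u * Pfam C pi P i u v = Sm u v.
Proof. by rewrite Pfam_eq mulrC divfK // gt_eqF // marg_gt0. Qed.

Lemma Pfam_ker i : is_kernel (Pfam C pi P i).
Proof.
split=> [u v|u]; first by rewrite Pfam_eq divr_ge0 ?Sm_ge0 ?marg_ge0.
under eq_bigr do rewrite Pfam_eq.
by rewrite -mulr_suml Sm_row divff // gt_eqF // marg_gt0.
Qed.


Lemma w_pos x y : pi x * P x y != 0 -> 0 < pi x * P x y.
Proof. by move=> h; rewrite lt_def h w_ge0. Qed.

Lemma Sm_ge_w D x y : pi x * P x y <= Sm (restr D x) (restr D y).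
Proof.
rewrite /Sm.
apply: (@le_trans _ _ (\sum_(y' | restr D y' == restr D y) pi x * P x y')).
  by apply: sum_ge_term => // *; exact: w_ge0.
apply: (sum_ge_term (Pr := fun x' => restr D x' == restr D x)
  (F := fun x' => \sum_(y' | restr D y' == restr D y) pi x' * P x' y')) => //.
by move=> x' _; apply: sumr_ge0 => *; exact: w_ge0.
Qed.

Lemma Pfam_pos x y i : 0 < pi x * P x y ->
  0 < Pfam C pi P i (restr (C i) x) (restr (C i) y).
Proof.
move=> h; rewrite Pfam_eq divr_gt0 ?marg_gt0 //.
exact: lt_le_trans h (Sm_ge_w _ _ _).
Qed.

Lemma prodPf_pos x y : 0 < pi x * P x y ->
  0 < \prod_(i < n) Pfam C pi P i (restr (C i) x) (restr (C i) y).
Proof. by move=> h; apply: prodr_gt0 => i _; exact: Pfam_pos. Qed.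

Lemma ZP_pos x : 0 < Zf C (Pfam C pi P) x.
Proof.
have : 0 < \sum_y P x y by rewrite P_ker.2.
case/sum_pos_ex => y [_ hy].
have hw : 0 < pi x * P x y by rewrite mulr_gt0.
apply: lt_le_trans (prodPf_pos hw) _; rewrite /Zf.
apply: (sum_ge_term (Pr := predT)) => // y' _.
by apply: prodr_ge0 => i _; exact: (Pfam_ker i).1.
Qed.

Lemma Pbold_ker : is_kernel (Pbold C pi P).
Proof.
split=> [x y|x].
  rewrite /Pbold; apply: divr_ge0; last exact: ltW (ZP_pos x).
  by apply: prodr_ge0 => i _; exact: (Pfam_ker i).1.
by rewrite /Pbold -mulr_suml divff // gt_eqF // ZP_pos.
Qed.

Lemma Pbold_pos x y : 0 < pi x * P x y -> 0 < Pbold C pi P x y.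
Proof. by move=> h; rewrite /Pbold divr_gt0 ?ZP_pos ?prodPf_pos. Qed.

Lemma sum_Sm D (g : XC T D -> XC T D -> R) :
  \sum_u \sum_v Sm u v * g u v =
  \sum_x \sum_y pi x * P x y * g (restr D x) (restr D y).
Proof.
rewrite -[RHS](part_sum D); apply: eq_bigr => u _.
under eq_bigr do rewrite /Sm big_distrl.
under eq_bigr do under eq_bigr do rewrite big_distrl.
rewrite exchange_big /=; apply: eq_bigr => x /eqP hx.
rewrite -(part_sum D (fun y => pi x * P x y * g (restr D x) (restr D y))).
apply: eq_bigr => v _; apply: eq_bigr => y /eqP hy.
by rewrite hx hy.
Qed.

Variable G : rel 'I_d.

Lemma part1 (M : Xs T -> Xs T -> R) (L : forall i, XC T (C i) -> XC T (C i) -> R) :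
  (forall i, is_kernel (L i)) -> factorizable G C L M ->
  (forall x, Zf C (Pfam C pi P) x <= Zf C L x) ->
  (KL pi P (Pbold C pi P) + \sum_(i < n) KL (marg (C i) pi) (Pfam C pi P i) (L i)
     <= KL pi P M)%E.
Proof.
move=> HL [_ HM] HZ.
have [[i [u [v [hS hL0]]]]|hn] :=
  pselect (exists i u v, 0 < Sm (D := C i) u v /\ L i u v = 0).
  have [x [/eqP hx hxv]] := sum_pos_ex hS.
  have [y [/eqP hy hw]] := sum_pos_ex hxv.
  rewrite (@KL_inf _ _ pi P M) ?leey //; exists x, y; split; first by rewrite gt_eqF.
  by rewrite HM (bigD1 i) //= hx hy hL0 !mul0r.
have hLpos x y : 0 < pi x * P x y -> forall i, 0 < L i (restr (C i) x) (restr (C i) y).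
  move=> hw i; rewrite lt_def (HL i).1 andbT; apply/negP => /eqP e.
  apply: hn; exists i, (restr (C i) x), (restr (C i) y); split => //.
  exact: lt_le_trans hw (Sm_ge_w _ _ _).
have hZL x : 0 < Zf C L x := lt_le_trans (ZP_pos x) (HZ x).
have hM x y : 0 < pi x * P x y -> 0 < M x y.
  by move=> hw; rewrite HM divr_gt0 // prodr_gt0 // => i _; exact: hLpos.
rewrite (@KL_real _ _ pi P M pi_pos P_ker.1); last first.
  by move=> x y /(w_pos); exact: hM.
rewrite (@KL_real _ _ pi P (Pbold C pi P) pi_pos P_ker.1); last first.
  by move=> x y /(w_pos); exact: Pbold_pos.
rewrite (eq_bigr (fun i => (\sum_x \sum_y pi x * P x y *
   (ln (Pfam C pi P i (restr (C i) x) (restr (C i) y))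
    - ln (L i (restr (C i) x) (restr (C i) y))))%:E)); last first.
  move=> i _; rewrite KL_real //; last 3 first.
  - exact: marg_gt0.
  - exact: (Pfam_ker i).1.
  - move=> u v; rewrite margPfam // => h; rewrite lt_def (HL i).1 andbT.
    apply/negP => /eqP e; apply: hn; exists i, u, v; split => //.
    by rewrite lt_def h Sm_ge0.
  congr (_%:E).
  under eq_bigr do under eq_bigr do rewrite margPfam //.
  exact: (sum_Sm (fun u v => ln (Pfam C pi P i u v) - ln (L i u v))).
rewrite sumEFin -EFinD lee_fin.
rewrite [X in _ + X]exch3.
rewrite -big_split /=; apply: ler_sum => x _.
rewrite -big_split /=; apply: ler_sum => y _.
have [w0|wn] := eqVneq (pi x * P x y) 0.
  rewrite w0; under eq_bigr do rewrite mul0r.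
  by rewrite big1_eq !mul0r addr0.
have wp := w_pos wn.
have hP : 0 < P x y by move: wp; rewrite pmulr_rgt0.
rewrite -mulr_sumr sumrB /Pbold HM.
have [hp1 e1] := ln_prod (fun i => Pfam_pos i wp).
have [hp2 e2] := ln_prod (fun i => hLpos x y wp i).
rewrite !ln_div ?posrE ?ZP_pos ?hZL // e1 e2.
rewrite -mulrDr ler_pM2l //.
have : ln (Zf C (Pfam C pi P) x) <= ln (Zf C L x).
  by rewrite ler_ln ?posrE ?ZP_pos ?hZL ?HZ.
lra.
Qed.

End Main.

Theorem theorem2p28 (R : realType) (d : nat) (T : 'I_d -> finType)
    (G : rel 'I_d) (n : nat) (C : 'I_n -> {set 'I_d})
    (pi : Xs T -> R) (P : Xs T -> Xs T -> R) :
  symmetric G -> irreflexive G ->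
  (forall i, clique G (C i)) ->
  \bigcup_(i < n) C i = [set: 'I_d] ->
  is_prob pi -> (forall x, 0 < pi x) ->
  is_kernel P ->
  (forall (M : Xs T -> Xs T -> R)
          (L : forall i : 'I_n, XC T (C i) -> XC T (C i) -> R),
      (forall i, is_kernel (L i)) -> is_kernel M ->
      factorizable G C L M ->
      (forall x, Zf C (Pfam C pi P) x <= Zf C L x) ->
      (KL pi P (Pbold C pi P)
         + \sum_(i < n) KL (marg (C i) pi) (Pfam C pi P i) (L i)
       <= KL pi P M)%E)
  /\
  (admissible G C pi P (Pbold C pi P) /\
   (forall M, admissible G C pi P M -> (KL pi P (Pbold C pi P) <= KL pi P M)%E) /\
   (forall M, admissible G C pi P M -> KL pi P M = KL pi P (Pbold C pi P) ->
      M = Pbold C pi P)).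
Proof.
move=> Gsym Girr Gcl Cov pip pipos Pk.
have p1 : forall (M : Xs T -> Xs T -> R)
          (L : forall i : 'I_n, XC T (C i) -> XC T (C i) -> R),
      (forall i, is_kernel (L i)) -> factorizable G C L M ->
      (forall x, Zf C (Pfam C pi P) x <= Zf C L x) ->
      (KL pi P (Pbold C pi P)
         + \sum_(i < n) KL (marg (C i) pi) (Pfam C pi P i) (L i)
       <= KL pi P M)%E.
  by move=> M L HL Hf HZ; apply: (part1 pip pipos Pk HL Hf HZ).
have KLi0 : forall (L : forall i : 'I_n, XC T (C i) -> XC T (C i) -> R),
    (forall i, is_kernel (L i)) ->
    forall i, (0 <= KL (marg (C i) pi) (Pfam C pi P i) (L i))%E.
  move=> L HL i.
  exact: (KL_ge0 (fun u => marg_gt0 pip pipos u) (Pfam_ker C pip pipos Pk i).1 (Pfam_ker C pip pipos Pk i) (HL i)).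
split; first by move=> M L HL _ Hf HZ; exact: p1.
have adm : admissible G C pi P (Pbold C pi P).
  exists (Pfam C pi P); split; first exact: (Pfam_ker C pip pipos Pk).
  split; first exact: (Pbold_ker C pip pipos Pk).
  by split.
split => //; split.
  move=> M [L [HL [HM [Hf HZ]]]].
  apply: le_trans (p1 M L HL Hf HZ); apply: leeDl.
  by apply: sume_ge0 => i _; exact: KLi0.
move=> M [L [HL [HM [Hf HZ]]]] Heq.
have h := p1 M L HL Hf HZ; rewrite Heq in h.
have Pbpos : forall x y, pi x * P x y != 0 -> 0 < Pbold C pi P x y.
  by move=> x y /(w_pos pipos Pk); exact: Pbold_pos.
move: h; rewrite (@KL_real _ _ pi P (Pbold C pi P) pipos Pk.1 Pbpos).
set b := (\sum_s _)%R => h.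
have s0 : (\sum_(i < n) KL (marg (C i) pi) (Pfam C pi P i) (L i) <= 0)%E.
  by move: h; rewrite -[X in (_ <= X)%E]adde0 leeD2lE.
have eKL : forall i, KL (marg (C i) pi) (Pfam C pi P i) (L i) = 0%E.
  move=> i; apply/le_anti; rewrite KLi0 // andbT.
  apply: le_trans s0; rewrite (bigD1 i) //=; apply: leeDl.
  by apply: sume_ge0 => j _; exact: KLi0.
have eL : L = Pfam C pi P.
  apply: functional_extensionality_dep => i; apply/funext => u; apply/funext => v.
  exact: (KL_zero (fun u => marg_gt0 pip pipos u) (Pfam_ker C pip pipos Pk i).1 (Pfam_ker C pip pipos Pk i) (HL i) (eKL i)).
subst L; apply/funext => x; apply/funext => y.
by rewrite Hf.2.
Qed.
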